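(* In the troll-farm voting model described in the context, fix an information structure $(F_0,F_1)$ and a type distribution $H$ with $H(\tfrac12)<\tfrac12$, and suppose that under $H$ the government wins the election in both states when the sender plays optimally, i.e. $V_0^*(H)\ge\tfrac12$ and $V_1^*(H)\ge\tfrac12$. Then there exists a type distribution $\hat H$ (a cdf with a density with full support on $\mathbb{R}$) that admits greater polarisation than $H$ and under which the election aggregates information, i.e. $V_0^*(\hat H)<\tfrac12\le V_1^*(\hat H)$.
   Context: Model. There is an unknown state $\theta\in\{0,1\}$, each state having prior probability $\tfrac12$. There is a continuum of voters of mass one; each voter has a type $x\in\mathbb{R}$, types being distributed according to a cdf $H$ with density $h$ having full support on $\mathbb{R}$. A voter of type $x$ who votes for the government receives payoff $1-x$ if $\theta=1$ and $-x$ if $\theta=0$; voting against gives payoff $0$. In state $\theta$, each voter independently draws an informative signal $s\in\mathbb{R}$ from a cdf $F_\theta$ with density $f_\theta$ having full support on $\mathbb{R}$, where $f_0(0)=f_1(0)$ and $m(s)=f_1(s)/f_0(s)$ is strictly increasing. For $x\in(0,1)$ let $s^*(x)=m^{-1}\!\left(\frac{x}{1-x}\right)$. A sender chooses, for each type $x$, $\alpha_x\in[0,1]$ (mass of trolls) and a probability distribution $\tilde F_x$ with density $\tilde f_x$ (trolls' messages, not depending on the state). A voter of type $x$ observes, with probability $1-\alpha_x$, her informative signal, and with probability $\alpha_x$ a message drawn from $\tilde F_x$, without knowing which; after observing $s$ her posterior is $$\pi_x(s)=\frac{(1-\alpha_x)f_1(s)+\alpha_x\tilde f_x(s)}{(1-\alpha_x)f_1(s)+\alpha_x\tilde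 f_x(s)+(1-\alpha_x)f_0(s)+\alpha_x\tilde f_x(s)},$$ and she votes for the government iff $\pi_x(s)\ge x$. Her probability of voting for the government in state $\theta$ is $p_\theta(x)=\int_{\{s:\pi_x(s)\ge x\}}[(1-\alpha_x)f_\theta(s)+\alpha_x\tilde f_x(s)]\,ds$, and the vote share is $V_\theta=\int p_\theta(x)\,dH(x)$. The sender's payoff is $u(V_\theta)$, $u$ strictly increasing; she maximises $\tfrac12u(V_0)+\tfrac12u(V_1)$, and among choices with the same vote shares in both states prefers pointwise-smaller $\alpha$ (strictly smaller for some $x$). $V_\theta^*(H)$ denotes the vote share in state $\theta$ under the sender's optimal strategy when the type distribution is $H$; it equals $V_0^*(H)=H(\tfrac12)+\int_{1/2}^{1}\frac{F_0[s^*(x)]-F_1[s^*(x)]}{xF_0[s^*(x)]-(1-x)F_1[s^*(x)]}(1-x)\,dH(x)$ and $V_1^*(H)=H(\tfrac12)+\int_{1/2}^{1}\frac{F_0[s^*(x)]-F_1[s^*(x)]}{xF_0[s^*(x)]-(1-x)F_1[s^*(x)]}\,x\,dH(x)$. The government wins in state $\theta$ iff its vote share is at least $\tfrac12$; the election aggregates information iff the government wins in state $1$ and not in state $0$. Definition (polarisation): a distribution $\hat H$ admits greater polarisation than $H$ iff $\hat H(x)\ge H(x)$ for all $x\le\tfrac12$ and $\hat H(x)\le H(x)$ for all $x\ge\tfrac12$. *)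

(* Defs.v *)
From HB Require Import structures.
From mathcomp Require Import all_boot all_order all_algebra.
From mathcomp Require Import all_classical all_reals all_analysis.
Set Implicit Arguments. Unset Strict Implicit. Unset Printing Implicit Defensive.
Import Order.TTheory GRing.Theory Num.Theory.
Local Open Scope classical_set_scope.
Local Open Scope ring_scope.

Section Defs.
Variable R : realType.
Notation mu := (@lebesgue_measure R).

Definition cdf_with_density (G g : R -> R) : Prop :=
  [/\ (forall x, 0 <= g x),
      measurable_fun setT g,
      (\int[mu]_(t in setT) (g t)%:E = 1)%E &
      (forall x, ((G x)%:E = \int[mu]_(t in `]-oo, x]) (g t)%:E)%E)].

(* full support on R: every nondegenerate interval has positive mass *)
Definition full_support (G : R -> R) : Prop :=
  forall a b, a < b -> G a < G b.

Definition type_distribution (H h : R -> R) : Prop :=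
  cdf_with_density H h /\ full_support H.

Definition lik_ratio (f0 f1 : R -> R) (s : R) : R := f1 s / f0 s.

(* information structure (F0,F1) with densities f0,f1 of full support
   (positive densities so that m is defined everywhere), f0(0)=f1(0),
   m strictly increasing, and m^{-1}(y) defined for all y > 0
   (so that s*(x) is defined for every x in (0,1)). *)
Definition info_structure (F0 F1 f0 f1 : R -> R) : Prop :=
  [/\ cdf_with_density F0 f0 /\ cdf_with_density F1 f1,
      (forall s, 0 < f0 s) /\ (forall s, 0 < f1 s),
      f0 0 = f1 0,
      (forall s t, s < t -> lik_ratio f0 f1 s < lik_ratio f0 f1 t) &
      (forall y, 0 < y -> exists s, lik_ratio f0 f1 s = y)].

Definition sstar (f0 f1 : R -> R) (x : R) : R :=
  xget 0 [set s | lik_ratio f0 f1 s = x / (1 - x)].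

Definition vfactor (F0 F1 f0 f1 : R -> R) (x : R) : R :=
  let s := sstar f0 f1 x in
  (F0 s - F1 s) / (x * F0 s - (1 - x) * F1 s).

(* V_0^*(H) and V_1^*(H); dH(x) = h(x) dx *)
Definition V0star (F0 F1 f0 f1 H h : R -> R) : R :=
  H (2^-1) + Rintegral mu `[2^-1, 1]%classic
     (fun x => vfactor F0 F1 f0 f1 x * (1 - x) * h x).

Definition V1star (F0 F1 f0 f1 H h : R -> R) : R :=
  H (2^-1) + Rintegral mu `[2^-1, 1]%classic
     (fun x => vfactor F0 F1 f0 f1 x * x * h x).

Definition more_polarised (Hh H : R -> R) : Prop :=
  (forall x, x <= 2^-1 -> H x <= Hh x) /\
  (forall x, 2^-1 <= x -> Hh x <= H x).

End Defs.

(* Main.v *)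
Require Import Defs.
From mathcomp Require Import all_boot all_order all_algebra.
From mathcomp Require Import all_classical all_reals all_analysis.
From mathcomp Require Import measurable_realfun.
From mathcomp Require Import ring lra.
Import Order.TTheory GRing.Theory Num.Theory.
Local Open Scope ring_scope.

Section Aux.
Set Implicit Arguments.
Unset Strict Implicit.
Context {R : realType}.
Local Notation mu := (@lebesgue_measure R).
Local Open Scope classical_set_scope.

Lemma split_int (f : R -> \bar R) (a : R) (y : itv_bound R) :
  measurable_fun [set: R] f -> (forall x, (0 <= f x)%E) ->
  (BRight a <= y)%O ->
  (\int[mu]_(t in [set` Interval -oo%O y]) f t =
   \int[mu]_(t in `]-oo, a]) f t + \int[mu]_(t in [set` Interval (BRight a) y]) f t)%E.
Proof.
move=> mf f0 ay.
rewrite (@itv_bndbnd_setU _ _ _ (BRight a)) //.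
rewrite ge0_integral_setU //.
- exact: measurable_funS mf.
- apply/disj_setPS => z [] /=; rewrite !in_itv /= => za.
  by case: y ay => [b y|[]] //= _; rewrite ltNge za.
Qed.

Lemma Esub (a b : R) (I : \bar R) : b%:E = (a%:E + I)%E -> I = (b - a)%:E.
Proof.
by case: I => [r||] //= [->]; rewrite addrC addrK.
Qed.

Lemma measurable_inv : measurable_fun [set: R] (GRing.inv : R -> R).
Proof.
rewrite -(setUv [set (0:R)]).
apply/measurable_funU => //.
  apply: measurableC => //.
split; first exact: measurable_fun_set1.
apply: open_continuous_measurable_fun.
  apply: closed_openC; apply: accessible_closed_set1.
  apply: hausdorff_accessible; exact: Rhausdorff.
move=> x; rewrite inE /= => /eqP x0.
exact: inv_continuous.
Qed.

Section CDF.
Variables (G g : R -> R).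
Hypothesis hG : cdf_with_density G g.

Lemma cdf_g0 x : 0 <= g x.
Proof. by case: hG. Qed.

Lemma cdf_meas : measurable_fun [set: R] (EFin \o g).
Proof. by case: hG => _ mg _ _; apply/measurable_EFinP. Qed.

Lemma cdf_def x : (G x)%:E = (\int[mu]_(t in `]-oo, x]) (g t)%:E)%E.
Proof. by case: hG. Qed.

Lemma cdf_tot : (\int[mu]_(t in [set: R]) (g t)%:E)%E = 1%:E.
Proof. by case: hG. Qed.

Lemma cdf_integrable : mu.-integrable [set: R] (EFin \o g).
Proof.
apply/integrableP; split; first exact: cdf_meas.
rewrite (_ : (\int[mu]_(x in [set: R]) `|(EFin \o g) x|)%E = 1%:E) ?ltry //.
rewrite -cdf_tot; apply: eq_integral => t _ /=.
by rewrite ger0_norm // cdf_g0.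
Qed.

Lemma cdf_tail x : (\int[mu]_(t in `]x, +oo[) (g t)%:E)%E = (1 - G x)%:E.
Proof.
apply: Esub; rewrite cdf_def -cdf_tot -set_itvNyy.
apply: (@split_int (fun t => (g t)%:E)) => //.
- exact: cdf_meas.
- by move=> t; rewrite lee_fin cdf_g0.
Qed.

Lemma cdf_incr a b : a <= b ->
  (G b)%:E = ((G a)%:E + \int[mu]_(t in `]a, b]) (g t)%:E)%E.
Proof.
move=> ab; rewrite !cdf_def.
apply: (@split_int (fun t => (g t)%:E)) => //.
- exact: cdf_meas.
- by move=> t; rewrite lee_fin cdf_g0.
Qed.

Lemma cdf_ge0 x : 0 <= G x.
Proof.
rewrite -lee_fin cdf_def; apply: integral_ge0 => t _; rewrite lee_fin cdf_g0 //.
Qed.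

Lemma cdf_le1 x : G x <= 1.
Proof.
have := cdf_tail x; have : (0 <= \int[mu]_(t in `]x, +oo[) (g t)%:E)%E.
  by apply: integral_ge0 => t _; rewrite lee_fin cdf_g0.
move=> /[swap] -> ; rewrite lee_fin subr_ge0 //.
Qed.

Lemma cdf_mono x y : x <= y -> G x <= G y.
Proof.
move=> xy; rewrite -lee_fin (cdf_incr xy) leeDl //.
by apply: integral_ge0 => t _; rewrite lee_fin cdf_g0.
Qed.

End CDF.

Section Info.
Variables (F0 F1 f0 f1 : R -> R).
Hypothesis hI : info_structure F0 F1 f0 f1.
Local Notation m := (lik_ratio f0 f1).

Lemma f0pos s : 0 < f0 s. Proof. by case: hI => _ [p _] _ _ _; apply: p. Qed.
Lemma f1pos s : 0 < f1 s. Proof. by case: hI => _ [_ p] _ _ _; apply: p. Qed.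
Lemma lik_mono s t : s < t -> m s < m t. Proof. by case: hI => _ _ _ p _; apply: p. Qed.
Lemma lik_surj y : 0 < y -> exists s, m s = y. Proof. by case: hI => _ _ _ _ p; apply: p. Qed.
Lemma hF0 : cdf_with_density F0 f0. Proof. by case: hI => -[]. Qed.
Lemma hF1 : cdf_with_density F1 f1. Proof. by case: hI => -[]. Qed.

Lemma lik0 : m 0 = 1.
Proof.
case: hI => _ _ e _ _; rewrite /lik_ratio e divff //.
by rewrite gt_eqF // -e f0pos.
Qed.

Lemma lik_pos s : 0 < m s.
Proof. by rewrite /lik_ratio divr_gt0 // ?f0pos ?f1pos. Qed.

Lemma sstar_ge0 x : 2^-1 <= x -> 0 <= sstar f0 f1 x.
Proof.
move=> hx; rewrite /sstar; case: xgetP => [s -> Ps|_] //.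
rewrite leNgt; apply/negP => s0.
have := lik_mono s0; rewrite lik0 /= Ps.
have [x1|x1] := ltP x 1.
  rewrite ltr_pdivrMr ?subr_gt0 // mul1r; lra.
have : x / (1 - x) <= 0.
  apply: mulr_ge0_le0; first lra.
  by rewrite invr_le0; lra.
have := lik_pos (xget 0 [set s | m s = x / (1 - x)]); rewrite Ps; lra.

Qed.

Lemma sstar_spec x : 0 < x < 1 -> m (sstar f0 f1 x) = x / (1 - x).
Proof.
move=> /andP[x0 x1]; rewrite /sstar.
apply: (@xgetPex _ 0 [set s | m s = x / (1 - x)]).
apply: lik_surj; apply: divr_gt0 => //; lra.
Qed.

Lemma sstar_mono x y : 2^-1 <= x -> x <= y -> y < 1 ->
  sstar f0 f1 x <= sstar f0 f1 y.
Proof.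
move=> hx xy y1; rewrite leNgt; apply/negP => /lik_mono.
rewrite !sstar_spec; try (apply/andP; split; lra).
have hx1 : 0 < 1 - x by lra.
have hy1 : 0 < 1 - y by lra.
rewrite ltr_pdivrMr // mulrAC ltr_pdivlMr //.
nra.

Qed.

Lemma fosd s : 0 <= s -> F1 s <= F0 s.
Proof.
move=> s0.
have : (\int[mu]_(t in `]s, +oo[) (f0 t)%:E <= \int[mu]_(t in `]s, +oo[) (f1 t)%:E)%E.
  apply: ge0_le_integral => //.
  - by move=> t _; rewrite lee_fin ltW // f0pos.
  - exact: (measurable_funS measurableT (@subsetT _ _) (cdf_meas hF0)).



  - exact: (measurable_funS measurableT (@subsetT _ _) (cdf_meas hF1)).

  - move=> t; rewrite /= in_itv /= andbT => st.
    have := lik_mono (le_lt_trans s0 st)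
; rewrite lik0 /lik_ratio.
    rewrite ltr_pdivlMr ?f0pos // mul1r lee_fin => /ltW //.
rewrite (cdf_tail hF0) (cdf_tail hF1) lee_fin; lra.
Qed.

Lemma vf_bnd x : 2^-1 <= x ->
  0 <= vfactor F0 F1 f0 f1 x /\ vfactor F0 F1 f0 f1 x * x <= 1.
Proof.
move=> hx; rewrite /vfactor /=.
set s := sstar f0 f1 x.
have s0 : 0 <= s by apply: sstar_ge0.
have AB := fosd s0.
have B0 : 0 <= F1 s by apply: (cdf_ge0 hF1).
set A := F0 s in AB *; set B := F1 s in AB B0 *.
have den0 : 0 <= x * A - (1 - x) * B by nra.
have [->|dpos] := eqVneq (x * A - (1 - x) * B) 0.
  by rewrite invr0 mulr0 mul0r; split.
have dp : 0 < x * A - (1 - x) * B by rewrite lt_neqAle eq_sym dpos den0.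
split; first by apply: divr_ge0 => //; lra.
rewrite mulrAC ler_pdivrMr // mul1r; nra.
Qed.

Definition psi (F : R -> R) (x : R) : R :=
  if x < 1 then F (sstar f0 f1 (Num.max x 2^-1)) else 1.

Lemma psi_nd (F g : R -> R) : cdf_with_density F g ->
  {homo psi F : x y / x <= y}.
Proof.
move=> hF x y xy; rewrite /psi.
case: ifPn => x1; case: ifPn => y1 //.
- apply: (cdf_mono hF); apply: sstar_mono.
  + by rewrite le_max lexx orbT.
  + by rewrite ge_max !le_max xy lexx !orbT.
  + by rewrite gt_max y1 /=; lra.
- exact: (cdf_le1 hF).
- by exfalso; move: x1 y1; rewrite -!leNgt; lra.
Qed.

Lemma vf_meas : measurable_fun (`[2^-1, 1] : set R) (vfactor F0 F1 f0 f1).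
Proof.
rewrite -(@setUitv1 _ _ (BLeft 2^-1) 1 true); last by rewrite bnd_simp; lra.
apply/measurable_funU => //; split; last exact: measurable_fun_set1.
pose q := fun x => (psi F0 x - psi F1 x) *
  GRing.inv (x * psi F0 x - (1 - x) * psi F1 x).
have mp0 : measurable_fun [set: R] (psi F0).
  by apply: nondecreasing_measurable => //; exact: (psi_nd hF0).
have mp1 : measurable_fun [set: R] (psi F1).
  by apply: nondecreasing_measurable => //; exact: (psi_nd hF1).
have mq : measurable_fun [set: R] q.
  apply: measurable_funM; first exact: measurable_funB.
  apply: measurableT_comp; first exact: measurable_inv.
  apply: measurable_funB; apply: measurable_funM => //.
  apply: measurable_funB => //; exact: measurable_cst.
apply: (eq_measurable_fun q); last exact: measurable_funS mq.
move=> x; rewrite inE /= in_itv /= => /andP[x1 x2].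
rewrite /q /psi x2 /= max_l //.
Qed.

End Info.

Lemma RE (D : set R) (f : R -> R) : measurable D ->
  mu.-integrable D (EFin \o f) ->
  (Rintegral mu D f)%:E = (\int[mu]_(x in D) (f x)%:E)%E.
Proof. move=> mD hf; rewrite /Rintegral fineK //; apply: (integrable_fin_num _ hf). exact: mD. Qed.


Lemma ae_neq (a : R) : {ae mu, forall x : R, x != a}.
Proof.
exists [set a]; split => //; first exact: lebesgue_measure_set1.
by move=> x /= /negP; rewrite negbK => /eqP.
Qed.

Lemma strict_ineq (F0 F1 f0 f1 h : R -> R) :
  info_structure F0 F1 f0 f1 ->
  measurable_fun [set: R] h -> (forall x, 0 <= h x) ->
  mu.-integrable (`[2^-1, 1] : set R) (EFin \o h) ->
  0 < Rintegral mu `[2^-1, 1] (fun x => vfactor F0 F1 f0 f1 x * (1 - x) * h x) ->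
  [/\ mu.-integrable (`[2^-1, 1] : set R) (EFin \o (fun x => vfactor F0 F1 f0 f1 x * (1 - x) * h x)),
      mu.-integrable (`[2^-1, 1] : set R) (EFin \o (fun x => vfactor F0 F1 f0 f1 x * x * h x)) &
  Rintegral mu `[2^-1, 1] (fun x => vfactor F0 F1 f0 f1 x * (1 - x) * h x) <
  Rintegral mu `[2^-1, 1] (fun x => vfactor F0 F1 f0 f1 x * x * h x)].
Proof.
move=> hI mh h0 hint a0pos.
set I := (`[2^-1, 1] : set R).
have mI : measurable I by exact: measurable_itv.
set v := vfactor F0 F1 f0 f1.
set g0 := (fun x => v x * (1 - x) * h x).
set g1 := (fun x => v x * x * h x).
have mv : measurable_fun I v := vf_meas hI.
have mhI : measurable_fun I h := measurable_funS measurableT (@subsetT _ _) mh.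
have vb x : I x -> [/\ 2^-1 <= x, x <= 1, 0 <= v x & v x * x <= 1].
  rewrite /I /= in_itv /= => /andP[x1 x2].
  by have [? ?] := vf_bnd hI x1; split.
have mg0 : measurable_fun I g0.
  apply: measurable_funM => //; apply: measurable_funM => //.
  by apply: measurable_funB => //; exact: measurable_cst.
have mg1 : measurable_fun I g1.
  by apply: measurable_funM => //; apply: measurable_funM.
have ig0 : mu.-integrable I (EFin \o g0).
  apply: le_integrable hint => //; first exact/measurable_EFinP.
  move=> x Ix /=; have [? ? ? ?] := vb x Ix; have hx0 := h0 x.
  have gp : 0 <= g0 x by apply: mulr_ge0; [apply: mulr_ge0 => //; lra|exact: h0].
  rewrite lee_fin (ger0_norm gp) (ger0_norm hx0) /g0 -[leRHS]mul1r.
  apply: ler_wpM2r => //; nra.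
have ig1 : mu.-integrable I (EFin \o g1).
  apply: le_integrable hint => //; first exact/measurable_EFinP.
  move=> x Ix /=; have [? ? ? ?] := vb x Ix; have hx0 := h0 x.
  have gp : 0 <= g1 x by apply: mulr_ge0; [apply: mulr_ge0 => //; lra|exact: h0].
  rewrite lee_fin (ger0_norm gp) (ger0_norm hx0) /g1 -[leRHS]mul1r.
  by apply: ler_wpM2r.
split => //.
rewrite ltNge; apply/negP => a10.
pose d := fun x => g1 x - g0 x.
have d0 x : I x -> 0 <= d x.
  move=> Ix; have [? ? ? ?] := vb x Ix; have := h0 x.
  rewrite /d /g0 /g1 => ?.
  have -> : v x * x * h x - v x * (1 - x) * h x = (2 * x - 1) * (v x * h x) by ring.
  by apply: mulr_ge0; [lra| apply: mulr_ge0].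
have md : measurable_fun I d by apply: measurable_funB.
have id : mu.-integrable I (EFin \o d).
  rewrite (_ : EFin \o d = (fun x => (EFin \o g1) x - (EFin \o g0) x)%E).
    exact: integrableB.
  by apply/funext => x /=; rewrite EFinB.

have Id0 : (\int[mu]_(x in I) (d x)%:E)%E = 0.
  have Dge : 0 <= Rintegral mu I d by apply: Rintegral_ge0.
  have Dle : Rintegral mu I d <= 0 by rewrite /d RintegralB // subr_le0.
  rewrite -(RE mI id); apply/eqP; by rewrite eq_le !lee_fin Dle Dge.

have ae : ae_eq mu I (EFin \o d) (cst 0).
  have mdE : measurable_fun I (EFin \o d) by apply/measurable_EFinP.
  apply/(ae_eq_integral_abs mu mI mdE).

  rewrite -Id0; apply: eq_integral => x; rewrite inE => Ix /=.
  by rewrite ger0_norm // d0.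
have : (\int[mu]_(x in I) (g0 x)%:E <= \int[mu]_(x in I) (cst 0%E x))%E.
  apply: ae_ge0_le_integral => //.
  - move=> x Ix; rewrite lee_fin /g0; have [? ? ? ?] := vb x Ix.
    by apply: mulr_ge0 => //; apply: mulr_ge0 => //; lra.
  - exact/measurable_EFinP.


  - have := negligibleU ae (ae_neq (2^-1)).
    apply: negligibleS => x /= Hx; apply: contrapT => Hn; apply: Hx => Ix.
    have xn : x != 2^-1 by apply: contrapT => H; apply: Hn; right.
    have dx : (d x)%:E = 0.
      by apply: contrapT => H; apply: Hn; left => /(_ Ix).
    move: dx; rewrite /d /g0 /g1 /= => -[].
    have [? ? ? ?] := vb x Ix.
    have -> : v x * x * h x - v x * (1 - x) * h x = (2 * x - 1) * (v x * h x) by ring.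
    move/eqP; rewrite mulf_eq0 => /orP[|/eqP vh]; last by rewrite mulrAC vh mul0r.

    move/eqP => x2; exfalso; move/eqP: xn; apply; lra.
rewrite integral0 -(RE mI ig0) lee_fin; lra.
Qed.

Lemma construct (F0 F1 f0 f1 H h : R -> R) :
  info_structure F0 F1 f0 f1 ->
  type_distribution H h ->
  H (2^-1) < 2^-1 ->
  2^-1 <= V0star F0 F1 f0 f1 H h ->
  2^-1 <= V1star F0 F1 f0 f1 H h ->
  exists Hh hh : R -> R,
    [/\ type_distribution Hh hh,
        more_polarised Hh H,
        V0star F0 F1 f0 f1 Hh hh < 2^-1 &
        2^-1 <= V1star F0 F1 f0 f1 Hh hh].
Proof.
move=> hI [hH fsH] c12.
rewrite /V0star /V1star.
set c := H (2^-1) in c12 *.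
set a0 := Rintegral mu `[2^-1, 1] (fun x => vfactor F0 F1 f0 f1 x * (1 - x) * h x).
set a1 := Rintegral mu `[2^-1, 1] (fun x => vfactor F0 F1 f0 f1 x * x * h x).

move=> V0 V1.
have mh : measurable_fun [set: R] h by case: hH.
have h0 := cdf_g0 hH.
have mI : measurable (`[2^-1, 1] : set R) by exact: measurable_itv.
have hint : mu.-integrable (`[2^-1, 1] : set R) (EFin \o h).
  by apply: integrableS (cdf_integrable hH) => //.
have a0pos : 0 < a0 by lra.
have [ig0 ig1 a01] := strict_ineq hI mh h0 hint a0pos.
have a1pos : 0 < a1 by lra.
pose lam := (2^-1 - c) / a1.
have lam0 : 0 < lam by apply: divr_gt0; lra.
have lama1 : lam * a1 = 2^-1 - c by rewrite /lam divfK // gt_eqF.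
have lam1 : lam <= 1 by rewrite /lam ler_pdivrMr // mul1r; lra.
set H1 := H 1.
have H1lt : H1 < 1.
  have := fsH 1 2; have := cdf_le1 hH 2; rewrite /H1; move=> ?.
  have h12 : (1:R) < 2 by lra.
  move=> /(_ h12); lra.

have cH1 : c <= H1 by apply: (cdf_mono hH); lra.
pose nu := (1 - c - lam * (H1 - c)) / (1 - H1).
have nu1 : 1 <= nu.
  rewrite /nu ler_pdivlMr ?subr_gt0 // mul1r.
  have : lam * (H1 - c) <= H1 - c by rewrite -[leRHS]mul1r ler_wpM2r // subr_ge0.
  lra.
have nuE : c + lam * (H1 - c) + nu * (1 - H1) = 1.
  rewrite /nu divfK; first ring.
  by rewrite subr_eq0 eq_sym lt_eqF.
pose w := fun x : R => if x < 2^-1 then 1 else if x <= 1 then lam else nu.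
pose hh := fun x => w x * h x.
have wlam x : lam <= w x.
  rewrite /w; case: ifP => _ //; case: ifP => _ //; lra.
have w1 x : x <= 1 -> w x <= 1.
  by rewrite /w => ->; case: ifP.
have wI x : 2^-1 <= x -> x <= 1 -> w x = lam.
  by rewrite /w => x1 ->; rewrite ltNge x1.
have wlo x : x < 2^-1 -> w x = 1.
  by rewrite /w => ->.
have whi x : 1 < x -> w x = nu.
  rewrite /w => x1; rewrite ltNge (le_trans _ (ltW x1)) /=; last lra.
  by rewrite leNgt x1.
have mw : measurable_fun [set: R] w.
  pose wa := fun x : R => if x < 2^-1 then 1 else lam.
  pose wb := fun x : R => if x <= 1 then 0 else nu - lam.
  have -> : w = wa \+ wb.
    apply/funext => x; rewrite /w /wa /wb /=.
    case: ifPn => x1; first by rewrite (le_trans (ltW x1)) ?addr0 //; lra.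
    by case: ifPn => x2; rewrite ?addr0 // addrC subrK.
  apply: measurable_funD.
    apply: nonincreasing_measurable => // x y xy; rewrite /wa.
    case: ifPn => y1; first by rewrite (le_lt_trans xy y1).
    by case: ifPn.
  apply: nondecreasing_measurable => // x y xy; rewrite /wb.
  case: ifPn => x1; case: ifPn => y1 //; first lra.
  by move: x1 => /negP []; apply: le_trans xy y1.


have mhh : measurable_fun [set: R] hh by apply: measurable_funM.
have hh0 x : 0 <= hh x by apply: mulr_ge0 => //; apply: le_trans (wlam x); lra.
have mhhE : measurable_fun [set: R] (EFin \o hh) by apply/measurable_EFinP.
have hhE0 x : (0 <= (EFin \o hh) x)%E by rewrite lee_fin.
pose J x := (\int[mu]_(t in `]-oo, x]) (hh t)%:E)%E.
have JH x : x <= 2^-1 -> J x = (H x)%:E.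
  move=> x12; rewrite /J (cdf_def hH).
  rewrite -(@integral_itv_bndo_bndc _ -oo%O x (fun t => (hh t)%:E)); last first.
    exact: (measurable_funS measurableT (@subsetT _ _) mhhE).
  rewrite -(@integral_itv_bndo_bndc _ -oo%O x (fun t => (h t)%:E)); last first.
    exact: (measurable_funS measurableT (@subsetT _ _) (cdf_meas hH)).

  apply: eq_integral => t; rewrite inE /= in_itv /= => tx.
  by rewrite /hh wlo ?mul1r //; apply: lt_le_trans tx x12.
pose Imid : set R := `]2^-1, 1].
have mid : (\int[mu]_(t in Imid) (hh t)%:E)%E = (lam * (H1 - c))%:E.
  transitivity (\int[mu]_(t in Imid) (lam%:E * (h t)%:E))%E.

    apply: eq_integral => t; rewrite inE /Imid /= in_itv /= => /andP[t1 t2].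
    by rewrite /hh wI ?EFinM //; apply: ltW.
  rewrite (@ge0_integralZl_EFin _ _ _ mu Imid); first last.
  - exact: ltW.
  - exact: (measurable_funS measurableT (@subsetT _ _) (cdf_meas hH)).
  - by move=> t _; rewrite lee_fin.
  - exact: measurable_itv.
  have h21 : (2^-1 : R) <= 1 by lra.
  have e := @cdf_incr H h hH (2^-1) 1 h21.
  by rewrite /Imid (Esub e) -EFinM.
have tailhi x : 1 <= x ->
    (\int[mu]_(t in `]x, +oo[) (hh t)%:E)%E = (nu * (1 - H x))%:E.
  move=> x1.
  transitivity (\int[mu]_(t in `]x, +oo[) (nu%:E * (h t)%:E))%E.
    apply: eq_integral => t; rewrite inE /= in_itv /= andbT => xt.
    by rewrite /hh whi ?EFinM //; apply: le_lt_trans xt.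
  rewrite (@ge0_integralZl_EFin _ _ _ mu `]x, +oo[); first last.
  - lra.
  - exact: (measurable_funS measurableT (@subsetT _ _) (cdf_meas hH)).
  - by move=> t _; rewrite lee_fin.
  - exact: measurable_itv.
  by rewrite (cdf_tail hH) -EFinM.
have tot : (\int[mu]_(t in [set: R]) (hh t)%:E)%E = 1%:E.
  rewrite -set_itvNyy (@split_int (EFin \o hh) 1 +oo%O mhhE) //.
  rewrite (@split_int (EFin \o hh) (2^-1) (BRight 1) mhhE) //; last first.
    by rewrite bnd_simp; lra.
  have := JH (2^-1) (lexx _); rewrite /J => ->.
  have := mid; rewrite /Imid => ->.
  by rewrite tailhi // -!EFinD; congr EFin.
have Jsplit x : (J x + \int[mu]_(t in `]x, +oo[) (hh t)%:E)%E = 1%:E.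
  by rewrite -tot -set_itvNyy (@split_int (EFin \o hh) x +oo%O mhhE).
have Jfin x : J x \is a fin_num.
  have J0 : (0 <= J x)%E by apply: integral_ge0 => t _; rewrite lee_fin.
  have T0 : (0 <= \int[mu]_(t in `]x, +oo[) (hh t)%:E)%E.
    by apply: integral_ge0 => t _; rewrite lee_fin.
  rewrite ge0_fin_numE // (@le_lt_trans _ _ 1%:E) ?ltry //.
  by rewrite -(Jsplit x) leeDl.
pose Hh x := fine (J x).
have HhE x : (Hh x)%:E = J x by rewrite /Hh fineK.
have hHh : cdf_with_density Hh hh by split.
exists Hh, hh; split.
- split => // a b ab.
  have eh := Esub (cdf_incr hH (ltW ab)).
  have ehh := Esub (cdf_incr hHh (ltW ab)).
  have : (lam%:E * \int[mu]_(t in `]a, b]) (h t)%:E <=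
          \int[mu]_(t in `]a, b]) (hh t)%:E)%E.
    rewrite -(@ge0_integralZl_EFin _ _ _ mu `]a, b]); first last.
    - exact: ltW.
    - exact: (measurable_funS measurableT (@subsetT _ _) (cdf_meas hH)).
    - by move=> t _; rewrite lee_fin.
    - exact: measurable_itv.
    apply: ge0_le_integral => //.
    - by move=> t _; rewrite lee_fin; apply: mulr_ge0 => //; apply: ltW.
    - apply/measurable_EFinP; apply: measurable_funM; first exact: measurable_cst.
      exact: (measurable_funS measurableT (@subsetT _ _) mh).
    - exact: (measurable_funS measurableT (@subsetT _ _) mhhE).
    - by move=> t _; rewrite lee_fin /hh ler_wpM2r.
  rewrite eh ehh -EFinM lee_fin => hle.
  have := fsH a b ab => hab.
  have : 0 < lam * (H b - H a) by apply: mulr_gt0 => //; rewrite subr_gt0.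
  lra.
- split => x hx.
  + by rewrite -lee_fin HhE JH.
  + rewrite -lee_fin HhE.
    have [x1|x1] := leP x 1.
      rewrite /J (cdf_def hH); apply: ge0_le_integral => //.
      * by move=> t _; rewrite lee_fin.
      * exact: (measurable_funS measurableT (@subsetT _ _) mhhE).
      * exact: (measurable_funS measurableT (@subsetT _ _) (cdf_meas hH)).
      * move=> t; rewrite /= in_itv /= => tx; rewrite lee_fin /hh.
        rewrite -[leRHS]mul1r ler_wpM2r // w1 //; apply: le_trans tx x1.
    have := Jsplit x; rewrite tailhi ?(ltW x1) // -HhE -EFinD => -[e].
    rewrite lee_fin.
    have := cdf_le1 hH x => hx1.
    have : (1 - H x) <= nu * (1 - H x) by rewrite -[leLHS]mul1r ler_wpM2r // subr_ge0.
    lra.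
- rewrite /Hh JH //= (@eq_Rintegral _ _ _ mu _ (fun x => lam *
    (vfactor F0 F1 f0 f1 x * (1 - x) * h x))); last first.
    move=> x; rewrite inE /= in_itv /= => /andP[x1 x2].
    by rewrite /hh wI //; ring.
  rewrite RintegralZl //.
  have : lam * a0 < lam * a1 by rewrite ltr_pM2l.
  rewrite -/c -/a0; lra.
- rewrite /Hh JH //= (@eq_Rintegral _ _ _ mu _ (fun x => lam *
    (vfactor F0 F1 f0 f1 x * x * h x))); last first.
    move=> x; rewrite inE /= in_itv /= => /andP[x1 x2].
    by rewrite /hh wI //; ring.
  rewrite RintegralZl //.
  rewrite -/c -/a1; lra.
Qed.

End Aux.

Theorem proposition3 (R : realType) (F0 F1 f0 f1 H h : R -> R) :
  info_structure F0 F1 f0 f1 ->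
  type_distribution H h ->
  H (2^-1) < 2^-1 ->
  2^-1 <= V0star F0 F1 f0 f1 H h ->
  2^-1 <= V1star F0 F1 f0 f1 H h ->
  exists Hh hh : R -> R,
    [/\ type_distribution Hh hh,
        more_polarised Hh H,
        V0star F0 F1 f0 f1 Hh hh < 2^-1 &
        2^-1 <= V1star F0 F1 f0 f1 Hh hh].
Proof.
exact: construct.
Qed.
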